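(* Let $\rho : G \to \mathrm{O}(V)$ be an orthogonal representation of a compact Lie group $G$ on a finite dimensional real Euclidean vector space $(V,\langle\cdot\mid\cdot\rangle)$ with $V^G=\{0\}$. Let $\sigma_1,\ldots,\sigma_n$ be homogeneous generators of $\mathbb{R}[V]^G$ of positive degrees $d_1,\ldots,d_n$, with $\sigma_1(v)=\langle v\mid v\rangle$, and let $\sigma=(\sigma_1,\ldots,\sigma_n)$. Let $\mathcal{C}$ be a class of $C^\infty$-functions as in the context, let $U \subseteq \mathbb{R}^q$ be an open neighborhood of $0$, and let $f=(f_1,\ldots,f_n) : U \to \sigma(V) \subseteq \mathbb{R}^n$ be a $\mathcal{C}$-mapping. Assume that $f_1$ is not identically zero and that, for every $j$ with $f_j$ not identically zero, $f_j(x) = x^{\alpha_j} g_j(x)$ on $U$ for some non-vanishing $g_j \in \mathcal{C}(U,\mathbb{R})$ and some $\alpha_j \in \mathbb{N}^q$. Then there exists $\delta \in \mathbb{N}^q$ such that $\alpha_1 = 2\delta$ and $\alpha_j \ge d_j\delta$ (componentwise) for all $j$ with $f_j$ not identically zero.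
   Context: The class $\mathcal{C}$: for every open $U \subseteq \mathbb{R}^q$ ($q\in\mathbb{N}$) a subalgebra $\mathcal{C}(U)\subseteq C^\infty(U,\mathbb{R})$ containing the real analytic functions and closed under composition, partial derivatives, division by a coordinate (a function vanishing on $\{x_i=a_i\}$ equals $(x_i-a_i)h$ with $h\in\mathcal{C}$), and taking local inverses of mappings with invertible Jacobian, and quasianalytic (a function with vanishing Taylor series at a point vanishes near that point). For $x\in\mathbb{R}^q$, $\alpha\in\mathbb{N}^q$, $x^\alpha = x_1^{\alpha_1}\cdots x_q^{\alpha_q}$. *)

(* Defs.v *)
From HB Require Import structures.
From mathcomp Require Import all_boot all_order all_algebra.
From mathcomp Require Import all_classical all_reals all_analysis.
From mathcomp Require mpoly.

Set Implicit Arguments.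
Unset Strict Implicit.
Unset Printing Implicit Defensive.

Import Order.TTheory GRing.Theory Num.Theory.
Import numFieldNormedType.Exports.
Local Open Scope ring_scope.
Local Open Scope classical_set_scope.

Definition ebasis (R : realType) (q : nat) (i : 'I_q) : 'rV[R]_q :=
  delta_mx 0 i.

Definition partial (R : realType) (q : nat) (i : 'I_q) (f : 'rV[R]_q -> R)
  : 'rV[R]_q -> R := fun x => derive f x (ebasis R i).

Definition dpart (R : realType) (q : nat) (l : seq 'I_q) (f : 'rV[R]_q -> R)
  : 'rV[R]_q -> R := foldr (@partial R q) f l.

Definition smooth_on (R : realType) (q : nat) (U : set 'rV[R]_q)
  (f : 'rV[R]_q -> R) : Prop :=
  forall (l : seq 'I_q) (x : 'rV[R]_q), U x ->
    (forall i : 'I_q, derivable (dpart l f) x (ebasis R i)) /\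
    {for x, continuous (dpart l f)}.

Definition monom (R : realType) (q : nat) (alpha : 'I_q -> nat)
  (x : 'rV[R]_q) : R := \prod_(i < q) (x 0 i) ^+ (alpha i).

Definition ps_partial (R : realType) (q : nat) (c : ('I_q -> nat) -> R)
  (a x : 'rV[R]_q) (N : nat) : R :=
  \sum_(al : {ffun 'I_q -> 'I_N.+1} | (\sum_(i < q) (al i : nat) <= N)%N)
     c (fun i => (al i : nat)) * monom (fun i => (al i : nat)) (x - a).
Definition ps_abs_partial (R : realType) (q : nat) (c : ('I_q -> nat) -> R)
  (a x : 'rV[R]_q) (N : nat) : R :=
  \sum_(al : {ffun 'I_q -> 'I_N.+1} | (\sum_(i < q) (al i : nat) <= N)%N)
     `|c (fun i => (al i : nat)) * monom (fun i => (al i : nat)) (x - a)|.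

Definition analytic_on (R : realType) (q : nat) (U : set 'rV[R]_q)
  (f : 'rV[R]_q -> R) : Prop :=
  forall a, U a -> exists r : R, 0 < r /\ exists c : ('I_q -> nat) -> R,
    forall x, ball a r x ->
      (exists M : R, forall N, ps_abs_partial c a x N <= M) /\
      (fun N => ps_partial c a x N) @ \oo --> f x.

Definition vecf (R : realType) (q p : nat) (F : 'I_p -> 'rV[R]_q -> R)
  (x : 'rV[R]_q) : 'rV[R]_p := \row_(k < p) F k x.

Definition jacobian (R : realType) (q : nat) (F : 'I_q -> 'rV[R]_q -> R)
  (a : 'rV[R]_q) : 'M[R]_q := \matrix_(k < q, i < q) partial i (F k) a.

(* The class C: C q U is the algebra C(U) of functions on the open set
   U of R^q.  (Functions are total on R^q; only their values on U matter.) *)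
Definition Cfamily (R : realType) :=
  forall q : nat, set 'rV[R]_q -> set ('rV[R]_q -> R).

Definition is_C_class (R : realType) (C : Cfamily R) : Prop :=
  (forall q (U : set 'rV[R]_q) f g, open U -> C q U f ->
     (forall x, U x -> f x = g x) -> C q U g) /\
  (forall q (U : set 'rV[R]_q) f, open U -> C q U f -> smooth_on U f) /\
  (forall q (U : set 'rV[R]_q) f g, open U -> C q U f -> C q U g ->
     C q U (fun x => f x + g x) /\ C q U (fun x => f x * g x)) /\
  (forall q (U : set 'rV[R]_q) (r : R), open U -> C q U (fun _ => r)) /\
  (forall q (U : set 'rV[R]_q) f, open U -> analytic_on U f -> C q U f) /\
  (forall q p (U : set 'rV[R]_q) (W : set 'rV[R]_p)
          (F : 'I_p -> 'rV[R]_q -> R) (g : 'rV[R]_p -> R),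
     open U -> open W -> (forall k, C q U (F k)) ->
     (forall x, U x -> W (vecf F x)) -> C p W g ->
     C q U (fun x => g (vecf F x))) /\
  (forall q (U : set 'rV[R]_q) f (i : 'I_q), open U -> C q U f ->
     C q U (partial i f)) /\
  (forall q (U : set 'rV[R]_q) f (i : 'I_q) (a : R), open U -> C q U f ->
     (forall x, U x -> x 0 i = a -> f x = 0) ->
     exists h, C q U h /\ forall x, U x -> f x = (x 0 i - a) * h x) /\
  (forall q (U : set 'rV[R]_q) (F : 'I_q -> 'rV[R]_q -> R) (a : 'rV[R]_q),
     open U -> (forall k, C q U (F k)) -> U a ->
     \det (jacobian F a) != 0 ->
     exists (U0 W0 : set 'rV[R]_q) (G : 'I_q -> 'rV[R]_q -> R),
       [/\ (open U0 /\ U0 `<=` U /\ U0 a), (open W0 /\ W0 (vecf F a)),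
           (forall k, C q W0 (G k)),
           (forall x, U0 x -> W0 (vecf F x) /\ vecf G (vecf F x) = x) &
           (forall y, W0 y -> U0 (vecf G y) /\ vecf F (vecf G y) = y)]) /\
  (* quasianalyticity *)
  (forall q (U : set 'rV[R]_q) f a, open U -> C q U f -> U a ->
     (forall l : seq 'I_q, dpart l f a = 0) ->
     \forall x \near a, f x = 0).

(* G is a compact subgroup of O(m), acting on row vectors by v |-> v *m A. *)
Definition compact_orth_group (R : realType) (m : nat) (G : set 'M[R]_m)
  : Prop :=
  [/\ G 1%:M,
      (forall A B, G A -> G B -> G (A *m B)),
      (forall A, G A -> G (invmx A)),
      (forall A, G A -> A *m A^T = 1%:M) &
      compact G].

Definition peval (R : realType) (m : nat) (p : mpoly.mpoly m R)
  (v : 'rV[R]_m) : R := mpoly.meval (fun i => v 0 i) p.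

Definition invariant_poly (R : realType) (m : nat) (G : set 'M[R]_m)
  (p : mpoly.mpoly m R) : Prop :=
  forall A v, G A -> peval p (v *m A) = peval p v.

(* sigma_0,...,sigma_{n-1} (the paper's sigma_1..sigma_n) are homogeneous
   (every monomial in the support has total degree d j; this is the
   unfolding of multinomials' [in R[m], d.-homog])
   generators of R[V]^G of degrees d *)
Definition hom_generators (R : realType) (m n : nat) (G : set 'M[R]_m)
  (sigma : 'I_n -> mpoly.mpoly m R) (d : 'I_n -> nat) : Prop :=
  [/\ (forall j, invariant_poly G (sigma j)),
      (forall j, all [pred mo | mpoly.mdeg mo == d j] (mpoly.msupp (sigma j))) &
      (forall p, invariant_poly G p ->
         exists P : mpoly.mpoly n R,
           p = mpoly.comp_mpoly [tuple sigma j | j < n] P)].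

(* Main.v *)
Set Warnings "-all".
Require Import Defs.
From HB Require Import structures.
From mathcomp Require Import all_boot all_order all_algebra.
From mathcomp Require Import all_classical all_reals all_analysis.
From mathcomp Require mpoly.
From mathcomp Require Import zify ring lra.
Import Order.TTheory GRing.Theory Num.Theory.
Import numFieldNormedType.Exports.
Local Open Scope classical_set_scope.
Local Open Scope ring_scope.
Lemma poly_bound (R : realType) m (p : mpoly.mpoly m R) dd :
 all [pred mo | mpoly.mdeg mo == dd] (mpoly.msupp p) ->
 exists K : R, 0 <= K /\ forall v : 'rV[R]_m,
   peval p v ^+ 2 <= K * (\sum_(i < m) v 0 i ^+ 2) ^+ dd.
Proof.
move=> Hall.
set K0 := \sum_(mo <- mpoly.msupp p) `|mpoly.mcoeff mo p|.
exists (K0 ^+ 2); split; first exact: sqr_ge0.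
move=> v; set S := \sum_(i < m) _; set s := Num.sqrt S.
have S0 : 0 <= S by apply: sumr_ge0 => i _; exact: sqr_ge0.
have s0 : 0 <= s by exact: sqrtr_ge0.
have hv : forall i, `|v 0 i| <= s.
  move=> i; rewrite -sqrtr_sqr ler_sqrt // /S (bigD1 i) //= lerDl.
  by apply: sumr_ge0 => k _; exact: sqr_ge0.
have K00 : 0 <= K0 by apply: sumr_ge0 => mo _.
have hb : `|peval p v| <= K0 * s ^+ dd.
  rewrite /peval mpoly.mevalE /K0.
  elim: (mpoly.msupp p) Hall => [|mo l IH] /=; first by rewrite !big_nil normr0 mul0r.
  move=> /andP [/eqP Hmo Hl].
  rewrite !big_cons mulrDl; apply: le_trans (ler_normD _ _) _.
  apply: lerD; last exact: IH.
  rewrite normrM ler_wpM2l // normr_prod.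
  rewrite -Hmo mpoly.mdegE -prodrXr.
  apply: ler_prod => i _; rewrite normrX exprn_ge0 //=.
  by apply: lerXn2r; rewrite ?nnegrE.
have -> : peval p v ^+ 2 = `|peval p v| ^+ 2 by rewrite real_normK ?num_real.
apply: le_trans (_ : (K0 * s ^+ dd) ^+ 2 <= _).
  by apply: lerXn2r; rewrite ?nnegrE // mulr_ge0 // exprn_ge0.
by rewrite exprMn -exprM mulnC exprM sqr_sqrtr.
Qed.
Lemma near0 (R : realType) q (U : set 'rV[R]_q) (g h : 'rV[R]_q -> R) :
  open U -> U 0 -> {for 0, continuous g} -> {for 0, continuous h} ->
  g 0 != 0 -> h 0 != 0 ->
  exists2 r : R, 0 < r & forall x, ball (0:'rV[R]_q) r x ->
    [/\ U x, `|g 0 - g x| < `|g 0| / 2 & `|h 0 - h x| < `|h 0| / 2].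
Proof.
move=> oU U0 cg ch g0 h0.
have nU : nbhs (0:'rV[R]_q) U by apply: open_nbhs_nbhs; split.
have ng : \forall x \near (0:'rV[R]_q), `|g 0 - g x| < `|g 0| / 2.
  move/cvg_ballP: cg => /(_ (`|g 0| / 2)) H.
  have : 0 < `|g 0| / 2 by rewrite divr_gt0 // normr_gt0.
  move/H; apply: filterS => x; by rewrite -ball_normE.
have nh : \forall x \near (0:'rV[R]_q), `|h 0 - h x| < `|h 0| / 2.
  move/cvg_ballP: ch => /(_ (`|h 0| / 2)) H.
  have : 0 < `|h 0| / 2 by rewrite divr_gt0 // normr_gt0.
  move/H; apply: filterS => x; by rewrite -ball_normE.
have H : nbhs (0:'rV[R]_q) (U `&` ((fun x => `|g 0 - g x| < `|g 0| / 2) `&` (fun x => `|h 0 - h x| < `|h 0| / 2))).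
  by apply: filterI => //; apply: filterI.
have [r r0 Hr] := proj1 (nbhs_ballP _ _) H. exists r => // x /Hr [? [? ?]]; by split.
Qed.

Definition pt {R : realType} {q : nat} (i : 'I_q) (c t : R) : 'rV[R]_q :=
  \row_k (if k == i then t else c).

Lemma pt_ball (R : realType) q (i : 'I_q) (c t r : R) :
  0 < r -> `|c| < r -> `|t| < r -> ball (0:'rV[R]_q) r (pt i c t).
Proof.
move=> r0 hc ht; split => // a k.
rewrite -ball_normE /ball_ /= !mxE sub0r normrN; by case: ifP.
Qed.

Lemma monom_pt (R : realType) q (alpha : 'I_q -> nat) (i : 'I_q) (c t : R) :
  monom alpha (pt i c t) = t ^+ alpha i * \prod_(k | k != i) c ^+ alpha k.
Proof.
rewrite /monom (bigD1 i) //= mxE eqxx; congr (_ * _).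
by apply: eq_bigr => k /negbTE Hk; rewrite mxE Hk.
Qed.

Lemma prod_pos (R : realType) q (alpha : 'I_q -> nat) (i : 'I_q) (c : R) :
  0 < c -> 0 < \prod_(k | k != i) c ^+ alpha k.
Proof. by move=> c0; apply: prodr_gt0 => k _; exact: exprn_gt0. Qed.

Arguments near0 {R q U g h}.
Arguments pt_ball {R q} i {c t r}.
Arguments monom_pt {R q}.
Arguments prod_pos {R q} alpha i {c}.
Arguments poly_bound {R m p dd}.

Theorem lemma5p3 (R : realType) (m n : nat) (G : set 'M[R]_m)
  (sigma : 'I_n -> mpoly.mpoly m R) (d : 'I_n -> nat) (n0 : (0 < n)%N)
  (C : Cfamily R) (q : nat) (U : set 'rV[R]_q) (f : 'I_n -> 'rV[R]_q -> R)
  (alpha : 'I_n -> 'I_q -> nat) :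
  compact_orth_group G ->
  (forall v : 'rV[R]_m, (forall A, G A -> v *m A = v) -> v = 0) ->
  hom_generators G sigma d ->
  (forall j, (0 < d j)%N) ->
  (forall v : 'rV[R]_m, peval (sigma (Ordinal n0)) v = \sum_(i < m) v 0 i ^+ 2) ->
  is_C_class C ->
  open U -> U 0 ->
  (forall j, C q U (f j)) ->
  (forall x, U x -> exists v : 'rV[R]_m, forall j, f j x = peval (sigma j) v) ->
  (exists x, U x /\ f (Ordinal n0) x != 0) ->
  (forall j, (exists x, U x /\ f j x != 0) ->
     exists gj : 'rV[R]_q -> R,
       [/\ C q U gj, (forall x, U x -> gj x != 0) &
           (forall x, U x -> f j x = monom (alpha j) x * gj x)]) ->
  exists delta : 'I_q -> nat,
    (forall i, alpha (Ordinal n0) i = 2 * delta i)%N /\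
    (forall j, (exists x, U x /\ f j x != 0) ->
       forall i, (d j * delta i <= alpha j i)%N).
Proof.
move=> _ _ [_ Hhom _] _ Hs1 HC oU U0 Cf Hv Hf1 Hg.
set j1 := Ordinal n0.
case: HC => _ [Hsm _].
have cont : forall g, C q U g -> {for 0, continuous g}.
  by move=> g Cg; have [_ ] := Hsm q U g oU Cg [::] 0 U0.
have f1pos : forall x, U x -> 0 <= f j1 x.
  move=> x Ux; have [v Hv'] := Hv x Ux; rewrite Hv' Hs1.
  by apply: sumr_ge0 => k _; exact: sqr_ge0.
have [g1 [Cg1 g1nz f1E]] := Hg j1 Hf1.
have g10 : g1 0 != 0 := g1nz 0 U0.
have even1 : forall i, ~~ odd (alpha j1 i).
  move=> i; apply/negP => odda.
  have [r r0 Hr] := near0 oU U0 (cont _ Cg1) (cont _ Cg1) g10 g10.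
  set c := r / 2.
  have c0 : 0 < c by rewrite divr_gt0.
  have cr : `|c| < r by rewrite gtr0_norm // /c; lra.
  have cr' : `|- c| < r by rewrite normrN.
  have [Up hp _] := Hr _ (pt_ball i r0 cr cr).
  have [Um hm _] := Hr _ (pt_ball i r0 cr cr').
  have P0 := prod_pos (alpha j1) i c0.
  set P := \prod_(k | k != i) c ^+ alpha j1 k in P0.
  have A0 : 0 < c ^+ alpha j1 i * P by rewrite mulr_gt0 // exprn_gt0.
  have e1 := f1pos _ Up; rewrite f1E // monom_pt -/P pmulr_rge0 // in e1.
  have e2 := f1pos _ Um.
  rewrite f1E // monom_pt exprNn -signr_odd odda expr1 -/P mulN1r mulNr in e2.
  rewrite mulNr oppr_ge0 pmulr_rle0 // in e2.
  have a1 := ler_norm (g1 0 - g1 (pt i c c)).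
  have a2 := ler_norm (g1 (pt i c c) - g1 0); rewrite distrC in a2.
  have a3 := ler_norm (g1 0 - g1 (pt i c (-c))).
  have a4 := ler_norm (g1 (pt i c (-c)) - g1 0); rewrite distrC in a4.
  case: (ltrgtP (g1 0) 0) => hs.
  - rewrite (ltr0_norm hs) in hp hm; lra.
  - rewrite (gtr0_norm hs) in hp hm; lra.
  - by rewrite hs eqxx in g10.
exists (fun i => (alpha j1 i)./2); split.
  move=> i; have := odd_double_half (alpha j1 i).
  by rewrite (negbTE (even1 i)) add0n mul2n => ->.
move=> j Hfj i.
have Hb : alpha j1 i = (2 * (alpha j1 i)./2)%N.
  have := odd_double_half (alpha j1 i).
  by rewrite (negbTE (even1 i)) add0n mul2n => ->.
rewrite leqNgt; apply/negP => Hlt.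
have Hexp : (2 * alpha j i + 1 <= alpha j1 i * d j)%N by lia.
have [gj [Cgj gjnz fjE]] := Hg j Hfj.
have gj0 : gj 0 != 0 := gjnz 0 U0.
have [K [K0 HK]] := poly_bound (Hhom j).
have fjb : forall x, U x -> f j x ^+ 2 <= K * f j1 x ^+ d j.
  by move=> x Ux; have [v Hv'] := Hv x Ux; rewrite !Hv' Hs1; exact: HK.
have [r r0 Hr] := near0 oU U0 (cont _ Cg1) (cont _ Cgj) g10 gj0.
set c := r / 2.
have c0 : 0 < c by rewrite divr_gt0.
have cr : `|c| < r by rewrite gtr0_norm // /c; lra.
have Pj0 := prod_pos (alpha j) i c0.
set Pj := \prod_(k | k != i) c ^+ alpha j k in Pj0.
have P10 := prod_pos (alpha j1) i c0.
set P1 := \prod_(k | k != i) c ^+ alpha j1 k in P10.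
set mj := `|gj 0| / 2.
have mj0 : 0 < mj by rewrite divr_gt0 // normr_gt0.
set M1 := `|g1 0| * 2.
have M10 : 0 <= M1 by rewrite mulr_ge0.
set A := Pj ^+ 2 * mj ^+ 2.
have A0 : 0 < A by rewrite mulr_gt0 // exprn_gt0.
set B := K * (P1 * M1) ^+ d j.
have B0 : 0 <= B by rewrite mulr_ge0 // exprn_ge0 // mulr_ge0 // ltW.
set t := Num.min (Num.min c 1) (A / (B + 1)).
have B1 : 0 < B + 1 by lra.
have t0 : 0 < t by rewrite !lt_min c0 ltr01 divr_gt0.
have tc : t <= c by rewrite /t !ge_min lexx.
have t1 : t <= 1 by rewrite /t !ge_min lexx orbT.
have tA : t <= A / (B + 1) by rewrite /t ge_min lexx orbT.
have tr : `|t| < r by rewrite gtr0_norm //; apply: le_lt_trans tc _; rewrite /c; lra.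
set x := pt i c t.
have [Ux h1 hj] := Hr _ (pt_ball i r0 cr tr); rewrite -/x in Ux h1 hj.
have e := fjb _ Ux.
have fpos := f1pos _ Ux.
rewrite fjE // f1E // !monom_pt -/Pj -/P1 in e.
rewrite f1E // monom_pt -/P1 in fpos.
have gjx : mj <= `|gj x|.
  have := lerB_dist (gj 0) (gj x); rewrite /mj; lra.
have g1x : `|g1 x| <= M1.
  have := normr_ge0 (g1 0); have := lerB_dist (g1 x) (g1 0); rewrite distrC /M1; lra.
set a := alpha j i in e Hexp.
set b := alpha j1 i in e fpos Hexp.
set T := t ^+ a ^+ 2.
have T0 : 0 < T by rewrite exprn_gt0 // exprn_gt0.
have L : T * A <= (t ^+ a * Pj * gj x) ^+ 2.
  rewrite !exprMn /T /A mulrA; apply: ler_wpM2l.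
    by rewrite mulr_ge0 // sqr_ge0.
  rewrite -(real_normK (num_real (gj x))).
  by apply: lerXn2r; rewrite ?nnegrE // ltW.
have Rb : t ^+ b * P1 * g1 x <= t ^+ b * P1 * M1.
  rewrite -(ger0_norm fpos) normrM ger0_norm; last by rewrite mulr_ge0 // ltW // exprn_gt0.
  by rewrite ler_wpM2l // mulr_ge0 // ltW // exprn_gt0.
have Rd : (t ^+ b * P1 * g1 x) ^+ d j <= (t ^+ b) ^+ d j * (P1 * M1) ^+ d j.
  rewrite -exprMn mulrA; apply: lerXn2r => //; rewrite nnegrE //.
  by rewrite !mulr_ge0 // ltW // exprn_gt0.
have Tb : (t ^+ b) ^+ d j <= T * t.
  rewrite -exprM /T -exprM -exprSr; apply: (ler_wiXn2l (ltW t0) t1).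
  by move: Hexp; rewrite mulnC addn1.
have Hc : T * A <= T * (t * B).
  apply: le_trans L _; apply: le_trans e _.
  apply: le_trans (ler_wpM2l K0 Rd) _.
  have QM : 0 <= (P1 * M1) ^+ d j by rewrite exprn_ge0 // mulr_ge0 // ltW.
  have -> : T * (t * B) = K * ((T * t) * (P1 * M1) ^+ d j) by rewrite /B; ring.
  by apply: ler_wpM2l => //; apply: ler_wpM2r.
rewrite ler_pM2l // in Hc.
rewrite ler_pdivlMr // mulrDr mulr1 in tA.
have : A < A by apply: le_lt_trans Hc _; apply: lt_le_trans tA; rewrite ltrDl.
by rewrite ltxx.
Qed.
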